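(* For every formula $\varphi$ of Hennessy–Milner logic, the sets $[\![\varphi]\!]^a$ and $[\![\varphi]\!]^c$ are clopen in the Lawson topology of $\mathbb{D}$. In particular, $C_\Phi$ is Lawson-closed.
   Context: Fix a finite set $\mathrm{Act}$ of events. For a dcpo $D$, $K(D)$ denotes its compact elements; a bifinite (SFP) domain is an algebraic dcpo in which for each finite $F\subseteq K(D)$ iterated minimal-upper-bound sets are finite and in $K(D)$ and every upper bound of $F$ is above a minimal upper bound. Scott topology: sets $U={\uparrow}(U\cap K(D))$; Lawson topology generated by ${\uparrow}k\setminus{\uparrow}l$, $k,l\in K(D)$. Mixed powerdomain $\mathcal{M}(D)$: pairs $(L,U)$, $L$ Scott-closed, $U$ Lawson-closed upper, $L={\downarrow}(L\cap U)$, ordered by $L\subseteq L'$ and $U'\subseteq U$. $\mathbb{D}$ is the initial solution over bifinite domains of $\mathbb{D}\cong\prod_{\alpha\in\mathrm{Act}}\mathcal{M}(\mathbb{D})$, $d=((L^d_\alpha,U^d_\alpha))_\alpha$, viewed as a mixed transition system $(\mathbb{D},\mathbb{R}^a,\mathbb{R}^c)$ with $(d,\alpha,d')\in\mathbb{R}^a$ iff $d'\in L^d_\alpha$ and $(d,\alpha,d')\in\mathbb{R}^c$ iff $d'\in U^d_\alpha$. Hennessy–Milner logic: $\varphi::=tt\mid\neg\varphi\mid\langle\alpha\rangle\varphi\mid\varphi\wedge\varphi$; $[\alpha]\varphi:=\neg\langle\alpha\rangle\neg\varphi$, $\varphi\vee\psi:=\neg(\neg\varphi\wedge\neg\psi)$;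 empty conjunction $tt$, empty disjunction $\neg tt$. For $m\in\{a,c\}$ ($\neg a=c$, $\neg c=a$): $(\mathbb{D},d)\models^m tt$; $\models^m\neg\varphi$ iff not $\models^{\neg m}\varphi$; $(\mathbb{D},d)\models^m\langle\alpha\rangle\varphi$ iff $(\mathbb{D},d')\models^m\varphi$ for some $(d,\alpha,d')\in\mathbb{R}^m$; $\wedge$ componentwise. $[\![\varphi]\!]^m=\{d\in\mathbb{D} : (\mathbb{D},d)\models^m\varphi\}$. Process terms $p::=\mathbf{0}\mid\bot\mid\alpha_{tt}.p\mid\alpha_\bot.p\mid p+p$ (no summand of $+$ equal to $\mathbf{0}$ or $\bot$). Transitions: $\bot\xrightarrow{\gamma}_\bot\bot$ for all $\gamma$; $\alpha_{tt}.p\xrightarrow{\alpha}_{tt}p$; $\alpha_\bot.p\xrightarrow{\alpha}_\bot p$; if $p\xrightarrow{\alpha}_v p'$ then $p+q\xrightarrow{\alpha}_v p'$ and $q+p\xrightarrow{\alpha}_v p'$. Formulas: $\varphi_{\mathbf{0}}=\bigwedge_\alpha\neg\langle\alpha\rangle tt$; $\varphi_\bot=tt$; $\varphi_{\alpha_{tt}.p}=\langle\alpha\rangle\varphi_p\wedge[\alpha]\varphi_p\wedge\bigwedge_{\beta\ne\alpha}\neg\langle\beta\rangle tt$; $\varphi_{\alpha_\bot.p}=[\alpha]\varphi_p\wedge\bigwedge_{\beta\ne\alpha}\neg\langle\beta\rangle tt$; $\varphi_{p+q}=\bigwedge\{\langle\alpha\rangle\varphi_{r'} : p+q\xrightarrow{\alpha}_{tt}r'\}\wedge\bigwedge_\alpha[\alpha]\bigvee\{\varphi_{r'}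 : p+q\xrightarrow{\alpha}_v r',\ v\in\{\bot,tt\}\}$. For $w=\delta_1\cdots\delta_n\in\mathrm{Act}^*$, $\alpha\in\mathrm{Act}$, term $p$: $\psi_{w,\alpha,p}=[\delta_1]\cdots[\delta_n](\langle\alpha\rangle\varphi_p\vee\neg\langle\alpha\rangle\varphi_p)$; $\Phi$ is the set of all such formulas; $C_\Phi=\bigcap_{\psi\in\Phi}[\![\psi]\!]^a$. *)

(* Defs.v *)
From mathcomp Require Import all_boot.
From Stdlib Require List.

Set Implicit Arguments.
Unset Strict Implicit.
Unset Printing Implicit Defensive.

Section OrderTheory.
Variables (T : Type) (le : T -> T -> Prop).

Definition partial_order : Prop :=
  (forall x, le x x) /\
  (forall x y z, le x y -> le y z -> le x z) /\
  (forall x y, le x y -> le y x -> x = y).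

Definition upper_bound (S : T -> Prop) (u : T) : Prop := forall x, S x -> le x u.

Definition is_lub (S : T -> Prop) (s : T) : Prop :=
  upper_bound S s /\ forall u, upper_bound S u -> le s u.

Definition directed (S : T -> Prop) : Prop :=
  (exists x, S x) /\
  forall x y, S x -> S y -> exists z, S z /\ le x z /\ le y z.

Definition is_dcpo : Prop := forall S, directed S -> exists s, is_lub S s.

Definition compact (k : T) : Prop :=
  forall S s, directed S -> is_lub S s -> le k s -> exists x, S x /\ le k x.

Definition algebraic : Prop :=
  forall x, directed (fun k => compact k /\ le k x) /\
            is_lub (fun k => compact k /\ le k x) x.

Definition mub (F : list T) (m : T) : Prop :=
  upper_bound (fun x => List.In x F) m /\
  forall u, upper_bound (fun x => List.In x F) u -> le u m -> le m u.

Inductive mubcl (F : list T) : T -> Prop :=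
| mubcl_base x : List.In x F -> mubcl F x
| mubcl_step (G : list T) m :
    (forall y, List.In y G -> mubcl F y) -> mub G m -> mubcl F m.

Definition bifinite : Prop :=
  is_dcpo /\ algebraic /\
  forall F : list T, (forall x, List.In x F -> compact x) ->
    (exists l : list T, forall x, mubcl F x <-> List.In x l) /\
    (forall x, mubcl F x -> compact x) /\
    (forall u, upper_bound (fun x => List.In x F) u ->
       exists m, mub F m /\ le m u).

Definition upper (U : T -> Prop) : Prop := forall x y, U x -> le x y -> U y.

Definition scott_open (U : T -> Prop) : Prop :=
  forall x, U x <-> exists k, compact k /\ U k /\ le k x.

Definition scott_closed (C : T -> Prop) : Prop := scott_open (fun x => ~ C x).

Definition lawson_subbasic (k l : T) (x : T) : Prop := le k x /\ ~ le l x.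

(* open sets of the topology generated by the subbasis: unions of finite
   intersections of subbasic sets (k, l compact) *)
Definition lawson_open (U : T -> Prop) : Prop :=
  forall x, U x -> exists B : list (T * T),
    (forall kl, List.In kl B -> compact kl.1 /\ compact kl.2) /\
    (forall kl, List.In kl B -> lawson_subbasic kl.1 kl.2 x) /\
    (forall y, (forall kl, List.In kl B -> lawson_subbasic kl.1 kl.2 y) -> U y).

Definition lawson_closed (C : T -> Prop) : Prop := lawson_open (fun x => ~ C x).

Definition lawson_clopen (U : T -> Prop) : Prop := lawson_open U /\ lawson_closed U.

Definition is_mixed (LU : (T -> Prop) * (T -> Prop)) : Prop :=
  scott_closed LU.1 /\ lawson_closed LU.2 /\ upper LU.2 /\
  forall x, LU.1 x <-> exists y, LU.1 y /\ LU.2 y /\ le x y.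

Definition scott_closure (A : T -> Prop) (x : T) : Prop :=
  forall C, scott_closed C -> (forall y, A y -> C y) -> C x.

(* functorial action of the mixed powerdomain on a map h *)
Definition Mmap (h : T -> T) (LU : (T -> Prop) * (T -> Prop))
  : (T -> Prop) * (T -> Prop) :=
  (scott_closure (fun y => exists x, LU.1 x /\ y = h x),
   fun y => exists x, LU.2 x /\ le (h x) y).

End OrderTheory.

Definition seteq (T : Type) (A B : T -> Prop) : Prop := forall x, A x <-> B x.

Definition paireq (T : Type) (P Q : (T -> Prop) * (T -> Prop)) : Prop :=
  seteq P.1 Q.1 /\ seteq P.2 Q.2.

(* The domain  D ~= prod_{alpha in Act} M(D), initial solution           *)
(* iota d alpha = (L^d_alpha, U^d_alpha); iinv is the inverse iso.       *)
(* Initiality is expressed by the minimal-invariant property:           *)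
(* id_D = sup_n p_n with p_0 = bottom, p_{n+1} = iota^-1 o F(p_n) o iota *)
Record initial_solution (Act : finType) (D : Type) (le : D -> D -> Prop)
  (iota : D -> Act -> (D -> Prop) * (D -> Prop))
  (iinv : (Act -> (D -> Prop) * (D -> Prop)) -> D) : Prop := {
  sol_po : partial_order le;
  sol_bifinite : bifinite le;
  sol_valid : forall d a, is_mixed le (iota d a);
  sol_order : forall d d', le d d' <->
     forall a, (forall x, (iota d a).1 x -> (iota d' a).1 x) /\
               (forall x, (iota d' a).2 x -> (iota d a).2 x);
  sol_iinv_iota : forall d, iinv (iota d) = d;
  sol_iota_iinv : forall P, (forall a, is_mixed le (P a)) ->
     forall a, paireq (iota (iinv P) a) (P a);
  sol_minimal : exists p : nat -> D -> D,
     (forall d x, le (p 0 d) x) /\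
     (forall n d a, paireq (iota (p n.+1 d) a) (Mmap le (p n) (iota d a))) /\
     (forall d, is_lub le (fun x => exists n, x = p n d) d)
}.

Inductive form (Act : Type) : Type :=
| Ftt
| Fneg of form Act
| Fdia of Act & form Act
| Fand of form Act & form Act.

Arguments Ftt {Act}.

Definition Fbox (Act : Type) (a : Act) (f : form Act) : form Act :=
  Fneg (Fdia a (Fneg f)).
Definition For (Act : Type) (f g : form Act) : form Act :=
  Fneg (Fand (Fneg f) (Fneg g)).
Definition bigand (Act : Type) (l : seq (form Act)) : form Act := foldr (@Fand Act) Ftt l.
Definition bigor (Act : Type) (l : seq (form Act)) : form Act :=
  foldr (@For Act) (Fneg Ftt) l.

Inductive mode := Ma | Mc.
Definition negm (m : mode) : mode := match m with Ma => Mc | Mc => Ma end.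

Section Semantics.
Variables (Act : finType) (D : Type) (iota : D -> Act -> (D -> Prop) * (D -> Prop)).

Definition trans_rel (m : mode) (d : D) (a : Act) (d' : D) : Prop :=
  match m with Ma => (iota d a).1 d' | Mc => (iota d a).2 d' end.

Fixpoint sat (m : mode) (f : form Act) (d : D) : Prop :=
  match f with
  | Ftt => True
  | Fneg g => ~ sat (negm m) g d
  | Fdia a g => exists d', trans_rel m d a d' /\ sat m g d'
  | Fand g h => sat m g d /\ sat m h d
  end.

Definition sem (m : mode) (f : form Act) : D -> Prop := fun d => sat m f d.

End Semantics.

Inductive proc (Act : Type) : Type :=
| P0
| Pbot
| Ptt of Act & proc Act
| Pbp of Act & proc Act
| Psum of proc Act & proc Act.

Arguments P0 {Act}.
Arguments Pbot {Act}.

Fixpoint wf_proc (Act : Type) (p : proc Act) : Prop :=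
  match p with
  | P0 | Pbot => True
  | Ptt _ q | Pbp _ q => wf_proc q
  | Psum q r => wf_proc q /\ wf_proc r /\
      q <> P0 /\ q <> Pbot /\ r <> P0 /\ r <> Pbot
  end.

Section CharFormulas.
Variable Act : finType.

Definition no_other (a : Act) : form Act :=
  bigand [seq Fneg (Fdia b Ftt) | b <- enum Act & b != a].

(* charf p = (phi_p, list of transitions (alpha, v, phi_{p'}) of p,
   with v = true for ->_tt and v = false for ->_bot).  The transition list
   follows the SOS rules literally:  bot -gamma->_bot bot for all gamma,
   alpha_v.p -alpha->_v p, and transitions of p+q are those of p and q. *)
Fixpoint charf (p : proc Act) : form Act * seq (Act * bool * form Act) :=
  match p with
  | P0 => (bigand [seq Fneg (Fdia b Ftt) | b <- enum Act], [::])
  | Pbot => (Ftt, [seq (g, false, Ftt) | g <- enum Act])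
  | Ptt a q => let f := (charf q).1 in
      (Fand (Fdia a f) (Fand (Fbox a f) (no_other a)), [:: (a, true, f)])
  | Pbp a q => let f := (charf q).1 in
      (Fand (Fbox a f) (no_other a), [:: (a, false, f)])
  | Psum q r => let t := (charf q).2 ++ (charf r).2 in
      (Fand (bigand [seq Fdia x.1.1 x.2 | x <- t & x.1.2])
            (bigand [seq Fbox a (bigor [seq x.2 | x <- t & x.1.1 == a])
                    | a <- enum Act]),
       t)
  end.

Definition phi_p (p : proc Act) : form Act := (charf p).1.

Definition psi (w : seq Act) (a : Act) (p : proc Act) : form Act :=
  foldr (@Fbox Act) (For (Fdia a (phi_p p)) (Fneg (Fdia a (phi_p p)))) w.

End CharFormulas.

Definition C_Phi (Act : finType) (D : Type)
  (iota : D -> Act -> (D -> Prop) * (D -> Prop)) : D -> Prop :=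
  fun d => forall (w : seq Act) (a : Act) (p : proc Act),
    wf_proc p -> sem iota Ma (psi w a p) d.

(* Main.v *)
Require Import Defs.
From mathcomp Require Import all_boot.
From Stdlib Require Import Classical FunctionalExtensionality PropExtensionality ClassicalEpsilon.
From Stdlib Require List.

Set Implicit Arguments.
Unset Strict Implicit.
Unset Printing Implicit Defensive.

Lemma pext (T : Type) (A B : T -> Prop) : (forall x, A x <-> B x) -> A = B.
Proof. move=> H; apply: functional_extensionality => x; apply: propositional_extensionality; exact: H. Qed.

Lemma dir_list_gen (D : Type) (le : D -> D -> Prop) (S : D -> Prop) (T : Type)
  (P : T -> D -> Prop) (l : list T) :
  directed le S -> (forall x y z, le x y -> le y z -> le x z) ->
  (forall t x x', P t x -> le x x' -> P t x') ->
  (forall t, List.In t l -> exists x, S x /\ P t x) ->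
  exists x, S x /\ forall t, List.In t l -> P t x.
Proof.
move=> [[x0 Sx0] Hd] Htr Hup; elim: l => [|t l IH] H.
  by exists x0; split=> // t [].
have [x1 [Sx1 P1]] := H t (or_introl erefl).
have [x2 [Sx2 P2]] : exists x, S x /\ forall t, List.In t l -> P t x.
  by apply: IH => t' Ht'; apply: H; right.
have [z [Sz [l1 l2]]] := Hd _ _ Sx1 Sx2.
exists z; split=> // t' [<-|Ht']; first exact: Hup P1 l1.
exact: Hup (P2 _ Ht') l2.
Qed.

Lemma powerset_fin (T : Type) (l : list T) : exists PL : list (T -> Prop),
  forall A : T -> Prop, (forall y, A y -> List.In y l) -> List.In A PL.
Proof.
elim: l => [|a l [PL IH]].
  exists [:: fun _ => False] => A HA; left; apply: pext => y; split=> // /HA [].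
exists (PL ++ map (fun B y => y = a \/ B y) PL) => A HA.
have HA' : forall y, (fun y => A y /\ y <> a) y -> List.In y l.
  by move=> y [Ay ya]; case: (HA y Ay) => // ay; case: ya.
have IA := IH _ HA'; apply/List.in_or_app.
case: (classic (A a)) => Aa.
  right; apply/List.in_map_iff; exists (fun y => A y /\ y <> a); split=> //.
  apply: pext => y /=; split; first by case=> [->|[]].
  by move=> Ay; case: (classic (y = a)) => [->|]; [left|right].
left; have -> // : A = (fun y => A y /\ y <> a).
by apply: pext => y; split=> [Ay|[]//]; split=> // ya; apply: Aa; rewrite -ya.
Qed.

Lemma fun_fin (K : finType) (X : Type) (x0 : X) (l : list X) :
  exists FL : list (K -> X), forall f, (forall a, List.In (f a) l) -> List.In f FL.
Proof.
have H : forall ks : seq K, exists FL : list (K -> X), forall f,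
    (forall a, List.In (f a) l) -> exists g, List.In g FL /\ forall a, a \in ks -> f a = g a.
  elim=> [|k ks [FL IH]].
    by exists [:: fun _ => x0] => f _; exists (fun _ => x0); split=> //; left.
  exists (List.flat_map (fun x => map (fun g => fun a => if a == k then x else g a) FL) l).
  move=> f Hf; have [g [Hg Hfg]] := IH f Hf.
  exists (fun a => if a == k then f k else g a); split.
    apply/List.in_flat_map; exists (f k); split=> //.
    by apply/List.in_map_iff; exists g.
  move=> a; rewrite inE; case: eqP => [->//|_ /= ]; exact: Hfg.
have [FL HF] := H (enum K); exists FL => f Hf.
have [g [Hg Hfg]] := HF f Hf.
have -> // : f = g.
by apply: functional_extensionality => a; apply: Hfg; rewrite mem_enum.
Qed.

Section Main.
Variables (Act : finType) (D : Type) (le : D -> D -> Prop)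
  (iota : D -> Act -> (D -> Prop) * (D -> Prop))
  (iinv : (Act -> (D -> Prop) * (D -> Prop)) -> D).
Hypothesis Hsol : initial_solution le iota iinv.
Variable p : nat -> D -> D.
Hypothesis p0 : forall d x, le (p 0 d) x.
Hypothesis pS : forall n d a, paireq (iota (p n.+1 d) a) (Mmap le (p n) (iota d a)).
Hypothesis plub : forall d, is_lub le (fun x => exists n, x = p n d) d.

Local Notation L d a := (iota d a).1.
Local Notation U d a := (iota d a).2.

Lemma le_refl x : le x x.
Proof. by case: (sol_po Hsol) => [H _]. Qed.
Lemma le_trans x y z : le x y -> le y z -> le x z.
Proof. by case: (sol_po Hsol) => [_ [H _]]; apply: H. Qed.
Lemma le_anti x y : le x y -> le y x -> x = y.
Proof. by case: (sol_po Hsol) => [_ [_ H]]; apply: H. Qed.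

Lemma le_iota d d' : le d d' <->
  forall a, (forall x, L d a x -> L d' a x) /\ (forall x, U d' a x -> U d a x).
Proof. exact: (sol_order Hsol). Qed.

Lemma pair_ext (P Q : (D -> Prop) * (D -> Prop)) : paireq P Q -> P = Q.
Proof.
case: P Q => [A B] [A' B'] [/= H1 H2].
by rewrite (pext H1) (pext H2).
Qed.

Lemma iota_pS n d a : iota (p n.+1 d) a = Mmap le (p n) (iota d a).
Proof. exact/pair_ext/pS. Qed.

Lemma eq_iota d d' : (forall a, iota d a = iota d' a) -> d = d'.
Proof.
move=> H; rewrite -(sol_iinv_iota Hsol d) -(sol_iinv_iota Hsol d').
by congr iinv; apply: functional_extensionality.
Qed.

Lemma iota_iinv P : (forall a, is_mixed le (P a)) -> forall a, iota (iinv P) a = P a.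
Proof. by move=> H a; apply/pair_ext/(sol_iota_iinv Hsol H). Qed.

Lemma p_le n d : le (p n d) d.
Proof. by case: (plub d) => H _; apply: H; exists n. Qed.

Lemma scl_incl (A : D -> Prop) x : A x -> scott_closure le A x.
Proof. by move=> Ax C _ H; apply: H. Qed.

Lemma scl_mono (A B : D -> Prop) x : (forall y, A y -> B y) ->
  scott_closure le A x -> scott_closure le B x.
Proof. by move=> AB H C HC HB; apply: H => // y /AB; apply: HB. Qed.

Lemma p_mono n d d' : le d d' -> le (p n d) (p n d').
Proof.
case: n => [|n] H; first exact: p0.
apply/le_iota => a; rewrite !iota_pS /Mmap /=.
have [H1 H2] := proj1 (le_iota d d') H a.
split=> x.
  by apply: scl_mono => y [z [Lz ->]]; exists z; split=> //; apply: H1.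
by case=> z [Uz Hz]; exists z; split=> //; apply: H2.
Qed.

Lemma sc_down C : scott_closed le C -> forall x y, le x y -> C y -> C x.
Proof.
move=> HC x y xy Cy; apply: NNPP => nCx.
have [k [ck [nCk kx]]] := proj1 (HC x) nCx.
by apply: (proj2 (HC y)) Cy; exists k; split=> //; split=> //; apply: le_trans xy.
Qed.

Lemma scl_down (A : D -> Prop) x y : le x y -> scott_closure le A y -> scott_closure le A x.
Proof. by move=> xy Hy C HC HA; apply: sc_down HC _ _ xy (Hy C HC HA). Qed.

Lemma scl_closed (A : D -> Prop) : scott_closed le (scott_closure le A).
Proof.
move=> x; split.
  move=> nx; apply: NNPP => H; apply: nx => C HC HA; apply: NNPP => nCx.
  have [k [ck [nCk kx]]] := proj1 (HC x) nCx.
  by apply: H; exists k; split=> //; split=> //; move=> Hk; apply: nCk; apply: Hk.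
case=> k [ck [nk kx]] Hx; apply: nk; exact: scl_down kx Hx.
Qed.

Lemma scl_min (A C : D -> Prop) : scott_closed le C -> (forall y, A y -> C y) ->
  forall x, scott_closure le A x -> C x.
Proof. by move=> HC HA x H; apply: H. Qed.

Definition d0 : D := iinv (fun _ => (fun _ => False, fun _ => False)).
Definition bot : D := p 0 d0.

Lemma bot_le x : le bot x.
Proof. exact: p0. Qed.

Lemma bot_compact : compact le bot.
Proof.
have [_ [_ Hb]] := sol_bifinite Hsol.
have [_ [Hc Hu]] := Hb [::] (fun x (H : List.In x [::]) => match H with end).
have [m [Hm mb]] := Hu bot (fun x (H : List.In x [::]) => match H with end).
have -> : bot = m by apply: le_anti => //; apply: bot_le.
apply: Hc; apply: (@mubcl_step _ _ _ [::]) => //.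
Qed.

Lemma alg x : directed le (fun k => compact le k /\ le k x) /\
              is_lub le (fun k => compact le k /\ le k x) x.
Proof. by have [_ [H _]] := sol_bifinite Hsol; apply: H. Qed.

Lemma compact_below_not x y : ~ le y x -> exists c, compact le c /\ le c y /\ ~ le c x.
Proof.
move=> nyx; apply: NNPP => H; apply: nyx.
have [_ [_ Hl]] := alg y; apply: Hl => c [cc cy].
by apply: NNPP => ncx; apply: H; exists c.
Qed.

Lemma dir_list (S : D -> Prop) (T : Type) (P : T -> D -> Prop) (l : list T) :
  directed le S -> (forall t x x', P t x -> le x x' -> P t x') ->
  (forall t, List.In t l -> exists x, S x /\ P t x) ->
  exists x, S x /\ forall t, List.In t l -> P t x.
Proof. by move=> Hd; apply: dir_list_gen Hd le_trans. Qed.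


Lemma down_sc (A : D -> Prop) (E : list D) : (forall y, A y -> List.In y E) ->
  scott_closed le (fun x => exists a, A a /\ le x a).
Proof.
move=> HE x; split.
  move=> nx; apply: NNPP => H; apply: nx.
  have Hk : forall k, compact le k -> le k x -> exists a, A a /\ le k a.
    by move=> k ck kx; apply: NNPP => nk; apply: H; exists k.
  apply: NNPP => nx'.
  have Hex : forall a, List.In a E -> exists k, (compact le k /\ le k x) /\ (A a -> ~ le k a).
    move=> a _; case: (classic (A a)) => Aa.
      have nxa : ~ le x a by move=> xa; apply: nx'; exists a.
      have [c [cc [cx nca]]] := compact_below_not nxa.
      by exists c.
    have [[k Hk0] _] := (alg x).1; by exists k.
  have [k [[ck kx] Hk']] := @dir_list _ _ (fun a k => A a -> ~ le k a) E (alg x).1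
     (fun a k k' H1 kk' Aa ka' => H1 Aa (le_trans kk' ka')) Hex.
  have [a [Aa ka]] := Hk k ck kx; exact: Hk' a (HE a Aa) Aa ka.
case=> k [ck [nk kx]] [a [Aa xa]]; apply: nk; exists a; split => //; exact: le_trans kx xa.
Qed.

Lemma closure_fin (A : D -> Prop) : (exists E, forall y, A y -> List.In y E) ->
  scott_closure le A = (fun x => exists a, A a /\ le x a).
Proof.
case=> E HE; apply: pext => x; split.
  apply: scl_min (down_sc HE) _ _ => y Ay; exists y; split=> //; exact: le_refl.
by case=> a [Aa xa]; apply: scl_down xa (scl_incl Aa).
Qed.

Definition fin_img (h : D -> D) := exists E, forall x, List.In (h x) E.

Lemma fin_img_sub h (B : D -> Prop) : fin_img h ->
  exists E, forall y, (exists x, B x /\ y = h x) -> List.In y E.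
Proof. by case=> E HE; exists E => y [x [_ ->]]. Qed.

Lemma Mmap_comp (h1 h2 h3 : D -> D) : (forall x y, le x y -> le (h1 x) (h1 y)) ->
  fin_img h1 -> fin_img h2 -> fin_img h3 -> (forall x, h1 (h2 x) = h3 x) ->
  forall P, Mmap le h1 (Mmap le h2 P) = Mmap le h3 P.
Proof.
move=> m1 f1 f2 f3 H [Lp Up]; rewrite /Mmap /=.
rewrite (closure_fin (fin_img_sub _ f2)) (closure_fin (fin_img_sub _ f1)) (closure_fin (fin_img_sub _ f3)).
congr pair; apply: pext => z; split.
- case=> _ [[y [[_ [[x [Lx ->]] yx]] ->]] za].
  exists (h3 x); split; first by exists x.
  by apply: le_trans za _; rewrite -H; apply: m1.
- case=> _ [[x [Lx ->]] za]; exists (h3 x); split=> //.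
  exists (h2 x); split; last by rewrite H.
  by exists (h2 x); split; [exists x|apply: le_refl].
- case=> y [[x [Ux xy]] yz]; exists x; split=> //.
  by rewrite -H; apply: le_trans yz; apply: m1.
- case=> x [Ux xz]; exists (h2 x); split; last by rewrite H.
  by exists x; split=> //; apply: le_refl.
Qed.

Lemma pS_iinv n d : p n.+1 d = iinv (fun a => Mmap le (p n) (iota d a)).
Proof.
rewrite -{1}(sol_iinv_iota Hsol (p n.+1 d)); congr iinv.
by apply: functional_extensionality => a; apply: iota_pS.
Qed.

Lemma p_fin n : fin_img (p n).
Proof.
elim: n => [|n [E HE]].
  exists [:: p 0 d0] => x; left; apply: le_anti; exact: p0.
have [PL HPL] := powerset_fin E.
pose PP := List.flat_map (fun A1 => map (fun A2 =>
   (scott_closure le A1, fun z => exists e, A2 e /\ le e z)) PL) PL.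
have [FL HFL] := fun_fin Act (fun _ : D => False, fun _ : D => False) PP.
exists (map iinv FL) => d; rewrite pS_iinv; apply: List.in_map; apply: HFL => a.
apply/List.in_flat_map; exists (fun y => exists x, L d a x /\ y = p n x); split.
  by apply: HPL => y [x [_ ->]].
apply/List.in_map_iff; exists (fun y => exists x, U d a x /\ y = p n x); split.
  rewrite /Mmap; congr pair; apply: pext => z; split.
    by case=> _ [[x [Ux ->]] xz]; exists x.
  by case=> x [Ux xz]; exists (p n x); split=> //; exists x.
by apply: HPL => y [x [_ ->]].
Qed.

Lemma p_idem n d : p n (p n d) = p n d.
Proof.
elim: n d => [|n IH] d; first by apply: le_anti; apply: p0.
apply: eq_iota => a; rewrite !iota_pS; apply: Mmap_comp => //.
- exact: p_mono.
- exact: p_fin.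
- exact: p_fin.
- exact: p_fin.
Qed.

Lemma pp_lo n d : p n (p n.+1 d) = p n d.
Proof.
elim: n d => [|n IH] d; first by apply: le_anti; apply: p0.
apply: eq_iota => a; rewrite !iota_pS; apply: Mmap_comp => //.
- exact: p_mono.
- exact: p_fin.
- exact: p_fin.
- exact: p_fin.
Qed.

Lemma pp_hi n d : p n.+1 (p n d) = p n d.
Proof.
elim: n d => [|n IH] d.
  by apply: le_anti; [apply: p_le|apply: p0].
apply: eq_iota => a; rewrite !iota_pS; apply: Mmap_comp => //.
- exact: p_mono.
- exact: p_fin.
- exact: p_fin.
- exact: p_fin.
Qed.

Lemma pp_lo_gen m k d : p m (p (m + k) d) = p m d.
Proof.
elim: k d => [|k IH] d; first by rewrite addn0 p_idem.
by rewrite -(IH (p (m + k.+1) d)) addnS pp_lo IH.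
Qed.

Lemma pp_hi_gen m k d : p (m + k) (p m d) = p m d.
Proof.
elim: k d => [|k IH] d; first by rewrite addn0 p_idem.
by rewrite -{1}IH addnS pp_hi IH.
Qed.

Lemma p_chain m k d : le (p m d) (p (m + k) d).
Proof.
rewrite -{1}(pp_hi_gen m k d); apply: p_mono; exact: p_le.
Qed.

Lemma p_fix_compact l : compact le l -> exists M, forall m, M <= m -> p m l = l.
Proof.
move=> cl.
have Hd : directed le (fun x => exists n, x = p n l).
  split; first by exists (p 0 l), 0.
  move=> _ _ [i ->] [j ->]; exists (p (maxn i j) l); split; first by exists (maxn i j).
  split.
    by rewrite -(subnKC (leq_maxl i j)); apply: p_chain.
  by rewrite -(subnKC (leq_maxr i j)); apply: p_chain.
have [_ [[M ->] HM]] := cl _ _ Hd (plub l) (le_refl l).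
exists M => m Mm.
have eM : p M l = l by apply: le_anti => //; apply: p_le.
by rewrite -eM -(subnKC Mm) pp_hi_gen.
Qed.

Lemma mixed_empty : is_mixed le (fun _ => False, fun _ => False).
Proof.
refine (conj _ (conj _ (conj _ _))) => /=.
- move=> x; split=> [_|[k [_ [H _]]] //].
  by exists bot; split; [exact: bot_compact|split=> //; exact: bot_le].
- by move=> x _; exists [::]; split=> //; split=> // y _ [].
- by [].
- by move=> x; split=> // [[y []]].
Qed.

Lemma mixed_full : is_mixed le (fun _ => True, fun _ => True).
Proof.
refine (conj _ (conj _ (conj _ _))) => /=.
- by move=> x; split=> // [[k [_ []]]].
- by move=> x [].
- by [].
- by move=> x; split=> // _; exists x; split=> //; split=> //; apply: le_refl.
Qed.

Lemma lc_and (A B : D -> Prop) : lawson_closed le A -> lawson_closed le B ->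
  lawson_closed le (fun x => A x /\ B x).
Proof.
move=> HA HB x nx; case: (classic (A x)) => Ax.
  have nBx : ~ B x by move=> Bx; apply: nx.
  have [B0 [H1 [H2 H3]]] := HB x nBx.
  by exists B0; split=> //; split=> // y /H3 nBy [].
have [B0 [H1 [H2 H3]]] := HA x Ax.
by exists B0; split=> //; split=> // y /H3 nAy [].
Qed.

Lemma lc_forall (T : Type) (C : T -> D -> Prop) : (forall t, lawson_closed le (C t)) ->
  lawson_closed le (fun x => forall t, C t x).
Proof.
move=> HC x nx; have [t nt] : exists t, ~ C t x.
  by apply: NNPP => H; apply: nx => t; apply: NNPP => nt; apply: H; exists t.
have [B0 [H1 [H2 H3]]] := HC t x nt.
by exists B0; split=> //; split=> // y /H3 nCy Hy; apply: nCy.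
Qed.

Lemma lc_imp (Q : Prop) (C : D -> Prop) : (Q -> lawson_closed le C) ->
  lawson_closed le (fun x => Q -> C x).
Proof.
move=> HC x nx; have [q nC] : Q /\ ~ C x.
  by split; [apply: NNPP => nq; apply: nx|move=> Cx; apply: nx].
have [B0 [H1 [H2 H3]]] := HC q x nC.
by exists B0; split=> //; split=> // y /H3 nCy Hy; apply: nCy; apply: Hy.
Qed.

Lemma lc_up y : lawson_closed le (fun x => le y x).
Proof.
move=> x nyx; have [c [cc [cy ncx]]] := compact_below_not nyx.
exists [:: (bot, c)]; split; first by move=> kl [<-|[]]; split=> //; apply: bot_compact.
split; first by move=> kl [<-|[]]; split=> //; apply: bot_le.
move=> z Hz yz; have [_ /= ncz] := Hz _ (or_introl erefl).
by apply: ncz; apply: le_trans yz.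
Qed.

Section NoTop.
Variable a0 : Act.

Lemma no_top z : exists l, compact le l /\ ~ le l z.
Proof.
have [y nyz] : exists y, ~ le y z.
  apply: NNPP => H.
  have Hall : forall y, le y z by move=> y; apply: NNPP => nyz; apply: H; exists y.
  have He := proj2 (proj1 (le_iota _ z) (Hall (iinv (fun _ => (fun _ => False, fun _ => False)))) a0).
  have Hf := proj1 (proj1 (le_iota _ z) (Hall (iinv (fun _ => (fun _ => True, fun _ => True)))) a0).
  rewrite iota_iinv /= in He; last by move=> _; apply: mixed_empty.
  rewrite iota_iinv /= in Hf; last by move=> _; apply: mixed_full.
  have [_ [_ [_ Hm]]] := sol_valid Hsol z a0.
  by have [w [_ [/He]]] := proj1 (Hm z) (Hf z I).
have [c [cc [_ ncz]]] := compact_below_not nyz.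
by exists c.
Qed.

Lemma sc_lc C : scott_closed le C -> lawson_closed le C.
Proof.
move=> HC x nCx; have [k [ck [nCk kx]]] := proj1 (HC x) nCx.
have [l [cl nlx]] := no_top x.
exists [:: (k, l)]; split; first by move=> kl [<-|[]].
split; first by move=> kl [<-|[]]; split.
move=> y Hy Cy; have [/= ky _] := Hy _ (or_introl erefl).
by apply: nCk; apply: sc_down HC _ _ ky Cy.
Qed.

End NoTop.

Section LawsonCompact.
Variables (I : Type) (V : I -> D -> Prop) (i0 : I).
Hypothesis Vfilt : forall i j, exists k, forall x, V k x -> V i x /\ V j x.
Hypothesis Vne : forall i, exists x, V i x.
Hypothesis Vcl : forall i, lawson_closed le (V i).

Definition Good m (g : nat -> D) :=
  forall i, exists v, V i v /\ forall j, j < m -> p j v = g j.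

Definition upd m (g : nat -> D) e := fun j => if j == m then e else g j.

Lemma good0 : Good 0 (fun _ => d0).
Proof. by move=> i; have [v Hv] := Vne i; exists v. Qed.

Lemma filt_list (T : Type) (Q : T -> I -> Prop) (l : list T) :
  (forall t, List.In t l -> exists i, Q t i) ->
  exists k, forall t, List.In t l -> exists i, Q t i /\ forall x, V k x -> V i x.
Proof.
elim: l => [|t l IH] H; first by exists i0.
have [k1 Hk1] := IH (fun t' Ht' => H t' (or_intror Ht')).
have [it Hit] := H t (or_introl erefl).
have [k Hk] := Vfilt k1 it.
exists k => t' [<-|Ht'].
  by exists it; split=> // x /Hk [].
have [i [Qi Hi]] := Hk1 t' Ht'.
by exists i; split=> // x /Hk [/Hi].
Qed.

Lemma good_step m g : Good m g -> exists e, Good m.+1 (upd m g e).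
Proof.
move=> Hg; apply: NNPP => H.
have H' : forall e, exists i, forall v, V i v ->
    (forall j, j < m.+1 -> p j v = upd m g e j) -> False.
  move=> e; apply: NNPP => H1; apply: H; exists e => i.
  apply: NNPP => H2; apply: H1; exists i => v Vv Hv; apply: H2; by exists v.
have [E HE] := p_fin m.
have [k Hk] := filt_list (l := E) (fun e _ => H' e).
have [v [Vv Hv]] := Hg k.
have [i [Qi Hi]] := Hk _ (HE v).
apply: (Qi v (Hi _ Vv)) => j; rewrite ltnS leq_eqVlt /upd.
by case: eqP => [->|_ /= /Hv].
Qed.

Fixpoint seqG (m : nat) : {g : nat -> D | Good m g} :=
  match m return {g : nat -> D | Good m g} with
  | 0 => exist _ (fun _ => d0) good0
  | m'.+1 => let: exist g Hg := seqG m' in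
      let: exist e He := constructive_indefinite_description _ (good_step Hg) in
      exist _ (upd m' g e) He
  end.

Definition seqv m := proj1_sig (seqG m).

Lemma seqv_S m j : j < m -> seqv m.+1 j = seqv m j.
Proof.
rewrite /seqv /=; case: (seqG m) => g Hg /=.
case: constructive_indefinite_description => e He /= jm.
by rewrite /upd (ltn_eqF jm).
Qed.

Definition ev j := seqv j.+1 j.

Lemma seqv_ev m j : j < m -> seqv m j = ev j.
Proof.
elim: m => [//|m IH]; rewrite ltnS leq_eqVlt; case/orP => [/eqP ->//|jm].
by rewrite seqv_S // IH.
Qed.

Lemma good_ev m : Good m ev.
Proof.
move=> i; have [v [Vv Hv]] := proj2_sig (seqG m) i.
by exists v; split=> // j jm; rewrite Hv // -/(seqv m) seqv_ev.
Qed.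

Lemma ev_chain j : le (ev j) (ev j.+1).
Proof.
have [v [_ Hv]] := good_ev j.+2 i0.
rewrite -(Hv j) // -(Hv j.+1) // -(pp_lo j v); exact: p_le.
Qed.

Lemma ev_chain_gen j k : le (ev j) (ev (j + k)).
Proof.
elim: k => [|k IH]; first by rewrite addn0; apply: le_refl.
by rewrite addnS; apply: le_trans IH (ev_chain _).
Qed.

Lemma list_N (T : Type) (P : T -> nat -> Prop) (l : list T) :
  (forall t, List.In t l -> exists N, forall m, N <= m -> P t m) ->
  exists N, forall t, List.In t l -> forall m, N <= m -> P t m.
Proof.
elim: l => [|t l IH] H; first by exists 0.
have [N1 H1] := IH (fun t' Ht' => H t' (or_intror Ht')).
have [N2 H2] := H t (or_introl erefl).
exists (maxn N1 N2) => t' [<-|Ht'] m Hm.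
  by apply: H2; apply: leq_trans Hm; apply: leq_maxr.
by apply: H1 => //; apply: leq_trans Hm; apply: leq_maxl.
Qed.

Lemma lawson_compact : exists w, forall i, V i w.
Proof.
have Hd : directed le (fun x => exists j, x = ev j).
  split; first by exists (ev 0), 0.
  move=> _ _ [i ->] [j ->]; exists (ev (maxn i j)); split; first by exists (maxn i j).
  by split; [rewrite -(subnKC (leq_maxl i j))|rewrite -(subnKC (leq_maxr i j))];
     apply: ev_chain_gen.
have [dcpo _] := sol_bifinite Hsol.
have [w Hw] := dcpo _ Hd.
exists w => i; apply: NNPP => nV.
have [B [HBc [HBw HB]]] := Vcl nV.
have [N HN] : exists N, forall kl, List.In kl B -> forall m, N <= m ->
    le kl.1 (ev m) /\ p m kl.2 = kl.2.
  apply: list_N => kl Hkl.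
  have [c1 c2] := HBc kl Hkl; have [k1w _] := HBw kl Hkl.
  have [_ [[j ->] Hj]] := c1 _ _ Hd Hw k1w.
  have [M HM] := p_fix_compact c2.
  exists (maxn j M) => m Hm; split; last by apply: HM; apply: leq_trans Hm; apply: leq_maxr.
  apply: le_trans Hj _; rewrite -(subnKC (leq_trans (leq_maxl j M) Hm)).
  exact: ev_chain_gen.
have [v [Vv Hv]] := good_ev N.+1 i.
apply: (HB v) Vv => kl Hkl; have [H1 H2] := HN kl Hkl N (leqnn N).
have evN : ev N = p N v by rewrite Hv.
split; first by apply: le_trans H1 _; rewrite evN; apply: p_le.
move=> k2v; have [_ nk2w] := HBw kl Hkl; apply: nk2w.
apply: le_trans (proj1 Hw _ (ex_intro _ N erefl)).
by rewrite evN -H2; apply: p_mono.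
Qed.

End LawsonCompact.

Section WithA.
Variable a0 : Act.

Lemma lub_bound S s : directed le S -> is_lub le S s -> forall a,
  (forall y, L s a y -> scott_closure le (fun y => exists x, S x /\ L x a y) y) /\
  (forall y, (forall x, S x -> U x a y) -> U s a y).
Proof.
move=> HS Hs.
pose Lam a := scott_closure le (fun y => exists x, S x /\ L x a y).
pose Ups a := fun y => forall x, S x -> U x a y.
have HcL : forall a, lawson_closed le (Lam a) by move=> a; apply: (sc_lc a0); apply: scl_closed.
have HcU : forall a, lawson_closed le (Ups a).
  move=> a; apply: lc_forall => x; apply: lc_imp => Sx; exact: (sol_valid Hsol x a).2.1.
have Hm : forall a, is_mixed le (Lam a, Ups a).
  move=> a; refine (conj _ (conj _ (conj _ _))) => /=.
  - exact: scl_closed.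
  - exact: HcU.
  - move=> y z Hy yz x Sx; exact: (sol_valid Hsol x a).2.2.1 y z (Hy x Sx) yz.
  move=> y; split; last by case=> w [Lw [_ yw]]; apply: scl_down yw Lw.
  move=> Ly.
  have HL' : scott_closed le (fun y => exists w, Lam a w /\ Ups a w /\ le y w).
    move=> x; split.
      move=> nx; apply: NNPP => H; apply: nx.
      have Hk : forall k, compact le k -> le k x ->
          exists w, Lam a w /\ Ups a w /\ le k w.
        by move=> k ck kx; apply: NNPP => nk; apply: H; exists k.
      have [[k0 Hk0] Hdir] := (alg x).1.
      pose I := {k | compact le k /\ le k x}.
      pose V := fun (i : I) w => le (sval i) w /\ Lam a w /\ Ups a w.
      have F1 : forall i j : I, exists k : I, forall w, V k w -> V i w /\ V j w.
        case=> [i Hi] [j Hj]; have [k [Hk' [ik jk]]] := Hdir _ _ Hi Hj.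
        by exists (exist _ k Hk') => w /= [kw Rw]; split; split=> //; apply: le_trans kw.
      have F2 : forall i : I, exists w, V i w.
        case=> [i [ci ix]] /=; have [w [Lw [Uw iw]]] := Hk i ci ix.
        by exists w.
      have F3 : forall i : I, lawson_closed le (V i).
        move=> i; apply: lc_and; first exact: lc_up.
        by apply: lc_and.
      have [w Hw] := @lawson_compact I V (exist _ k0 Hk0) F1 F2 F3.
      have [Lw Uw] := proj2 (Hw (exist _ k0 Hk0)).
      exists w; split=> //; split=> //.
      by apply: (proj2 (alg x).2) => k Hk'; apply: (proj1 (Hw (exist _ k Hk'))).
    case=> k [ck [nk kx]] [w [Lw [Uw xw]]]; apply: nk; exists w; split=> //; split=> //.
    exact: le_trans kx xw.
  apply: (scl_min HL') Ly => y' [x [Sx Lxy]].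
  have [[z0 Sz0] Hdir] := HS.
  pose I := {x' | S x' /\ le x x'}.
  pose V := fun (i : I) w => le y' w /\ Lam a w /\ U (sval i) a w.
  have F1 : forall i j : I, exists k : I, forall w, V k w -> V i w /\ V j w.
    case=> [i [Si xi]] [j [Sj xj]]; have [k [Sk [ik jk]]] := Hdir _ _ Si Sj.
    exists (exist _ k (conj Sk (le_trans xi ik))) => w /= [yw [Lw Uw]].
    by split; split=> //; split=> //; [apply: (proj2 (proj1 (le_iota _ _) ik a))|
       apply: (proj2 (proj1 (le_iota _ _) jk a))].
  have F2 : forall i : I, exists w, V i w.
    case=> [i [Si xi]] /=.
    have Liy : L i a y' := proj1 (proj1 (le_iota _ _) xi a) _ Lxy.
    have [_ [_ [_ Hmi]]] := sol_valid Hsol i a.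
    have [w [Lw [Uw yw]]] := proj1 (Hmi y') Liy.
    exists w; split=> //; split=> //; apply: scl_incl; exists i; split=> //.
  have F3 : forall i : I, lawson_closed le (V i).
    move=> i; apply: lc_and; first exact: lc_up.
    apply: lc_and; first exact: HcL.
    exact: (sol_valid Hsol _ a).2.1.
  have [w Hw] := @lawson_compact I V (exist _ x (conj Sx (le_refl x))) F1 F2 F3.
  have [yw [Lw _]] := Hw (exist _ x (conj Sx (le_refl x))).
  exists w; split=> //; split=> // x'' Sx''.
  have [k [Sk [xk x''k]]] := Hdir _ _ Sx Sx''.
  have [_ [_ Ukw]] := Hw (exist _ k (conj Sk xk)).
  exact: (proj2 (proj1 (le_iota _ _) x''k a)).
pose z := iinv (fun a => (Lam a, Ups a)).
have Hz : forall a, iota z a = (Lam a, Ups a) by apply: iota_iinv.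
have sz : le s z.
  apply: (proj2 Hs) => x Sx; apply/le_iota => a; rewrite Hz /=; split.
    by move=> y Ly; apply: scl_incl; exists x.
  by move=> y Uy; apply: Uy.
move=> a; have := proj1 (le_iota _ _) sz a; rewrite Hz /= => [[H1 H2]].
by split; [apply: H1|apply: H2].
Qed.

Definition cont n := forall S s, directed le S -> is_lub le S s ->
  exists x, S x /\ le (p n s) (p n x).

Lemma compact_of_cont n : cont n -> forall d, compact le (p n d).
Proof.
move=> Hc d S s HS Hs ks; have [x [Sx Hx]] := Hc S s HS Hs.
exists x; split=> //; rewrite -p_idem.
by apply: le_trans (p_mono n ks) (le_trans Hx (p_le _ _)).
Qed.

Lemma pre_sc n C : cont n -> scott_closed le C -> scott_closed le (fun y => C (p n y)).
Proof.
move=> Hc HC x; split.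
  move=> nx; have [c [[cc cx] Hcx]] : exists c, (compact le c /\ le c x) /\ le (p n x) (p n c).
    by have [c [Kc Hcx]] := Hc _ _ (alg x).1 (alg x).2; exists c.
  exists c; split=> //; split=> // Cc; apply: nx; apply: sc_down HC _ _ Hcx Cc.
case=> k [ck [nk kx]] Cx; apply: nk; exact: sc_down HC _ _ (p_mono n kx) Cx.
Qed.

Lemma pre_lc n e : cont n -> lawson_closed le (fun v => le (p n v) e).
Proof.
move=> Hc v nv.
have [c [[cc cv] Hcv]] := Hc _ _ (alg v).1 (alg v).2.
have [l [cl nl]] := no_top a0 v.
exists [:: (c, l)]; split; first by move=> kl [<-|[]].
split; first by move=> kl [<-|[]]; split.
move=> y Hy ye; have [/= cy _] := Hy _ (or_introl erefl).
by apply: nv; apply: le_trans Hcv (le_trans (p_mono n cy) ye).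
Qed.

Lemma max_img S (f : D -> D) : directed le S -> (forall x y, le x y -> le (f x) (f y)) ->
  fin_img f -> exists x0, S x0 /\ forall x, S x -> le (f x) (f x0).
Proof.
move=> HS mf [E HE].
have Hex : forall e, List.In e E -> exists x, S x /\ forall y, S y -> f y = e -> le e (f x).
  move=> e _; case: (classic (exists y, S y /\ f y = e)) => [[y [Sy fy]]|ne].
    by exists y; split=> // y' _ _; rewrite fy; apply: le_refl.
  have [[x Sx] _] := HS; exists x; split=> // y Sy fy; case: ne; by exists y.
have [x0 [Sx0 Hx0]] := @dir_list S _ (fun e x => forall y, S y -> f y = e -> le e (f x)) E HS
  (fun e x x' H xx' y Sy fy => le_trans (H y Sy fy) (mf _ _ xx')) Hex.
by exists x0; split=> // x Sx; apply: Hx0 (HE x) x Sx erefl.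
Qed.

Lemma cont_S n : cont n -> cont n.+1.
Proof.
move=> Hc S s HS Hs.
have [x0 [Sx0 Hmax]] := max_img HS (@p_mono n.+1) (p_fin n.+1).
exists x0; split=> //; apply/le_iota => a; rewrite !iota_pS /Mmap /=; split.
  move=> y; apply: scl_min (scl_closed _) _ y => _ [x [Lsx ->]].
  have HL := (lub_bound HS Hs a).1 x Lsx.
  apply: (scl_min (pre_sc Hc (scl_closed _))) HL => y [x' [Sx' Ly]].
  have := (proj1 (le_iota _ _) (Hmax x' Sx') a).1 (p n y); rewrite !iota_pS /=; apply.
  by apply: scl_incl; exists y.
move=> z [y [Uy yz]].
have [[z0 Sz0] Hdir] := HS.
pose I := {x | S x /\ le x0 x}.
pose V := fun (i : I) w => U (sval i) a w /\ le (p n w) (p n y).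
have F1 : forall i j : I, exists k : I, forall w, V k w -> V i w /\ V j w.
  case=> [i [Si xi]] [j [Sj xj]]; have [k [Sk [ik jk]]] := Hdir _ _ Si Sj.
  exists (exist _ k (conj Sk (le_trans xi ik))) => w /= [Uw pw].
  by split; split=> //; [apply: (proj2 (proj1 (le_iota _ _) ik a))|
       apply: (proj2 (proj1 (le_iota _ _) jk a))].
have F2 : forall i : I, exists w, V i w.
  case=> [i [Si xi]] /=.
  have := (proj1 (le_iota _ _) (Hmax i Si) a).2 (p n y); rewrite !iota_pS /=.
  case; first by exists y; split=> //; apply: le_refl.
  by move=> x' [Ux' px']; exists x'.
have F3 : forall i : I, lawson_closed le (V i).
  move=> i; apply: lc_and; first exact: (sol_valid Hsol _ a).2.1.
  exact: pre_lc.
have [w Hw] := @lawson_compact I V (exist _ x0 (conj Sx0 (le_refl x0))) F1 F2 F3.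
exists w; split; last by apply: le_trans yz; case: (Hw (exist _ x0 (conj Sx0 (le_refl x0)))).
apply: (lub_bound HS Hs a).2 => x Sx.
have [k [Sk [x0k xk]]] := Hdir _ _ Sx0 Sx.
have [Ukw _] := Hw (exist _ k (conj Sk x0k)).
exact: (proj2 (proj1 (le_iota _ _) xk a)).
Qed.

Lemma cont_all n : cont n.
Proof.
elim: n => [|n IH]; last exact: cont_S.
move=> S s [[x Sx] _] _; exists x; split=> //; exact: p0.
Qed.

Lemma p_compact n d : compact le (p n d).
Proof. exact: compact_of_cont (cont_all n) d. Qed.

End WithA.

Fixpoint depth (f : form Act) : nat :=
  match f with
  | Ftt => 0
  | Fneg g => depth g
  | Fdia _ g => (depth g).+1
  | Fand g h => maxn (depth g) (depth h)
  end.

Lemma sat_mono f :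
  (forall d d', le d d' -> sat iota Ma f d -> sat iota Ma f d') /\
  (forall d d', le d d' -> sat iota Mc f d' -> sat iota Mc f d).
Proof.
elim: f => [|g [IH1 IH2]|a g [IH1 IH2]|g [IG1 IG2] h [IH1 IH2]] /=.
- by split.
- split=> d d' dd' nd Hd; apply: nd; [exact: IH2 dd' Hd|exact: IH1 dd' Hd].
- split=> d d' dd' [y [Ty Hy]]; exists y; split=> //.
    exact: (proj1 (proj1 (le_iota _ _) dd' a)).
  exact: (proj2 (proj1 (le_iota _ _) dd' a)).
- split=> d d' dd' [H1 H2]; split.
  + exact: IG1 dd' H1.
  + exact: IH1 dd' H2.
  + exact: IG2 dd' H1.
  + exact: IH2 dd' H2.
Qed.

Lemma sat_p f n : depth f <= n -> forall m d, sat iota m f d <-> sat iota m f (p n d).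
Proof.
elim: f n => [|g IH|a g IH|g IG h IH] n /= Hn m d.
- by [].
- by have := IH n Hn (negm m) d; tauto.
- case: n Hn => // n' Hn; case: m => /=; split.
  + case=> y [Ly Hy]; exists (p n' y); split; last exact: (proj1 (IH n' Hn Ma y)).
    by rewrite iota_pS /=; apply: scl_incl; exists y.
  + case=> y [Ly Hy]; exists y; split=> //.
    exact: (proj1 (proj1 (le_iota _ _) (p_le n'.+1 d) a)).
  + case=> y [Uy Hy]; exists (p n' y); split; last exact: (proj1 (IH n' Hn Mc y)).
    by rewrite iota_pS /=; exists y; split=> //; apply: le_refl.
  + case=> z [Uz Hz]; rewrite iota_pS /= in Uz; case: Uz => x [Ux xz].
    exists x; split=> //; apply: (proj2 (IH n' Hn Mc x)).
    exact: (proj2 (sat_mono g)) _ _ xz Hz.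
- have Hg : depth g <= n by apply: leq_trans Hn; apply: leq_maxl.
  have Hh : depth h <= n by apply: leq_trans Hn; apply: leq_maxr.
  by have := IG n Hg m d; have := IH n Hh m d; tauto.
Qed.

Lemma filter_ex (T : Type) (P : T -> Prop) (l : list T) :
  exists l', forall e, List.In e l' <-> List.In e l /\ P e.
Proof.
elim: l => [|t l [l' Hl']]; first by exists [::] => e; split=> // [[]].
case: (classic (P t)) => Pt.
  exists (t :: l') => e /=; rewrite Hl'; split.
    by case=> [<-|[]]; [split=> //; left|split=> //; right].
  by case=> [[<-|Hl] Pe]; [left|right].
exists l' => e /=; rewrite Hl'; split; first by case=> Hl Pe; split=> //; right.
by case=> [[<-|Hl] Pe].
Qed.

Lemma lo_ext (A B : D -> Prop) : (forall x, A x <-> B x) -> lawson_open le A -> lawson_open le B.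
Proof.
move=> H HA x /H /HA [B0 [H1 [H2 H3]]]; exists B0; split=> //; split=> // y /H3; exact: (proj1 (H y)).
Qed.

Lemma lcl_ext (A B : D -> Prop) : (forall x, A x <-> B x) -> lawson_clopen le A -> lawson_clopen le B.
Proof.
move=> H [H1 H2]; split; first exact: lo_ext H1.
by apply: lo_ext H2 => x; have := H x; tauto.
Qed.

Lemma clopen_compl (A : D -> Prop) : lawson_clopen le A -> lawson_clopen le (fun x => ~ A x).
Proof.
case=> H1 H2; split=> //; apply: lo_ext H1 => x; split; [tauto|exact: NNPP].
Qed.

Section Sem.
Variable a0 : Act.

Lemma clopen_of (S : D -> Prop) n : (forall x y, le x y -> S x -> S y) ->
  (forall d, S d <-> S (p n d)) -> lawson_clopen le S.
Proof.
move=> Sup Sp; split.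
  move=> x Sx; have [l [cl nl]] := no_top a0 x.
  exists [:: (p n x, l)]; split; first by move=> kl [<-|[]]; split=> //; apply: p_compact.
  split; first by move=> kl [<-|[]]; split=> //; apply: p_le.
  move=> y Hy; have [/= py _] := Hy _ (or_introl erefl).
  exact: Sup py (proj1 (Sp x) Sx).
move=> x nSx; have [E HE] := p_fin n.
have [l' Hl'] := filter_ex (fun e => exists d, e = p n d /\ S e) E.
exists (map (fun e => (bot, e)) l'); split.
  move=> kl /List.in_map_iff [e [<- /Hl' [_ [d [-> _]]]]]; split; first exact: bot_compact.
  exact: p_compact.
split.
  move=> kl /List.in_map_iff [e [<- /Hl' [_ [d [_ Se]]]]]; split; first exact: bot_le.
  by move=> ex; apply: nSx; apply: Sup ex Se.
move=> y Hy Sy.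
have Hin : List.In (bot, p n y) (map (fun e => (bot, e)) l').
  apply: List.in_map; apply/Hl'; split=> //; exists y; split=> //; exact: (proj1 (Sp y) Sy).
by have [_ /= H] := Hy _ Hin; apply: H; apply: p_le.
Qed.

Lemma sem_clopen f : lawson_clopen le (sem iota Ma f) /\ lawson_clopen le (sem iota Mc f).
Proof.
have HMa : forall g, lawson_clopen le (sem iota Ma g).
  move=> g; apply: (clopen_of (n := depth g)); first exact: (proj1 (sat_mono g)).
  move=> d; exact: sat_p.
split=> //.
apply: (lcl_ext (A := fun x => ~ sem iota Ma (Fneg f) x)); last exact: clopen_compl.
by move=> x; rewrite /sem /=; split; [exact: NNPP|tauto].
Qed.

Lemma CPhi_closed : lawson_closed le (C_Phi iota).
Proof.
rewrite /C_Phi; apply: lc_forall => w; apply: lc_forall => a; apply: lc_forall => q.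
apply: lc_imp => _; exact: (proj2 (proj1 (sem_clopen _))).
Qed.

End Sem.

End Main.

Lemma lo_triv (D : Type) (le : D -> D -> Prop) (A : D -> Prop) :
  (forall x y : D, x = y) -> lawson_open le A.
Proof.
move=> H x Ax; exists [::]; split=> //; split=> // y _; by rewrite (H y x).
Qed.

Theorem lemma3p17 (Act : finType) (D : Type) (le : D -> D -> Prop)
  (iota : D -> Act -> (D -> Prop) * (D -> Prop))
  (iinv : (Act -> (D -> Prop) * (D -> Prop)) -> D)
  (Hsol : initial_solution le iota iinv) :
  (forall phi : form Act,
     lawson_clopen le (sem iota Ma phi) /\ lawson_clopen le (sem iota Mc phi)) /\
  lawson_closed le (C_Phi iota).
Proof.
have [p [p0 [pS plub]]] := sol_minimal Hsol.
case: (classic (exists a : Act, True)) => [[a0 _]|nA].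
  split; first exact: (sem_clopen Hsol p0 pS plub a0).
  exact: (CPhi_closed Hsol p0 pS plub a0).
have H : forall x y : D, x = y.
  move=> x y; have [_ [_ anti]] := sol_po Hsol.
  by apply: anti; apply/(sol_order Hsol) => a; case: nA; exists a.
split; first by move=> phi; split; split; apply: lo_triv.
exact: lo_triv.
Qed.
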